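(* Fix $L>0$ and $0\le\bar h<h$ (and lane length $d>0$). Then for every $\bar\alpha\in[0,1]$ and every $n\ge1$, $$\frac{n\,c^{UB}(\bar\alpha)}{n\,c(\bar\alpha)}\;\le\;2\,\frac{L+h-\sqrt{(L+h)(L+\bar h)}}{h-\bar h}\;\le\;2,$$ and $$\frac{n\,c^{UB}(\bar\alpha)}{C^*_n(\bar\alpha)}\;\le\;\frac{2n(L+h)}{(2n-1)(L+h)+\sqrt{(L+h)(L+\bar h)}}\;\le\;\frac{2n}{2n-1},$$ where $C^*_n(\bar\alpha)=\max\{C(\boldsymbol{\alpha}):\boldsymbol{\alpha}\in[0,1]^n,\ G(\boldsymbol{\alpha})=0\}$. (Here $n\,c^{UB}(\bar\alpha)$ is the common total upper-bound capacity of every feasible $\boldsymbol\beta$, i.e. $C^{UB}(\boldsymbol\beta^* )$, and $n\,c(\bar\alpha)$ is the worst-case total capacity $C(\boldsymbol\alpha_* )$; thus the first inequality bounds the price of negligence $\Lambda$ and the second bounds the price of no control $\Gamma$.)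
   Context: Model of a road with $n\ge1$ parallel lanes of common length $d>0$. Vehicles have length $L>0$. A vehicle keeps a headway (space gap) $\bar h$ to the vehicle in front of it if both it and the vehicle in front are autonomous, and headway $h$ otherwise, where $0\le \bar h<h$. Set $k_1=(L+h)/d$ and $k_2=(h-\bar h)/d$. The capacity of a lane with autonomy level $\alpha\in[0,1]$ (vehicle types i.i.d. Bernoulli with probability $\alpha$ of being autonomous) is $c(\alpha)=\frac{1}{k_1-k_2\alpha^2}$, and the upper-bound capacity (all autonomous vehicles in the lane platooned together) is $c^{UB}(\beta)=\frac{1}{k_1-k_2\beta}$. Let $\bar\alpha\in[0,1]$ be the overall fraction of autonomous vehicles on the road. For $\boldsymbol{\alpha}\in[0,1]^n$ let $C(\boldsymbol{\alpha})=\sum_{i=1}^n c(\alpha_i)$ and $G(\boldsymbol{\alpha})=\sum_{i=1}^n(\alpha_i-\bar\alpha)c(\alpha_i)$. The price of negligence $\Lambda$ is the supremum over $\bar\alpha,n$ of the ratio of the optimal upper-bound total capacity $C^{UB}(\boldsymbol\beta^* )$ to the minimum of $C$ under $G=0$; the price of no control $\Gamma$ is the supremum over $\bar\alpha,n$ of the ratio of $C^{UB}(\boldsymbol\beta^* )$ to the maximum of $C$ under $G=0$. *)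

(* Defs.v *)
From Stdlib Require Import Reals.
Open Scope R_scope.

Fixpoint rsum (n : nat) (f : nat -> R) : R :=
  match n with
  | O => 0
  | S m => rsum m f + f m
  end.

(* Model parameters: vehicle length L, headways h (mixed) and hbar
   (autonomous-autonomous), lane length d. *)
Definition k1 (L h d : R) : R := (L + h) / d.
Definition k2 (h hbar d : R) : R := (h - hbar) / d.

(* Lane capacity with autonomy level a (i.i.d. Bernoulli vehicle types). *)
Definition cap (L h hbar d a : R) : R := 1 / (k1 L h d - k2 h hbar d * a ^ 2).

(* Upper-bound lane capacity (autonomous vehicles platooned). *)
Definition capUB (L h hbar d b : R) : R := 1 / (k1 L h d - k2 h hbar d * b).

Definition Ctot (L h hbar d : R) (n : nat) (alpha : nat -> R) : R :=
  rsum n (fun i => cap L h hbar d (alpha i)).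

Definition Gcon (L h hbar d abar : R) (n : nat) (alpha : nat -> R) : R :=
  rsum n (fun i => (alpha i - abar) * cap L h hbar d (alpha i)).

Definition feasible (L h hbar d abar : R) (n : nat) (alpha : nat -> R) : Prop :=
  (forall i, (i < n)%nat -> 0 <= alpha i <= 1) /\ Gcon L h hbar d abar n alpha = 0.

Definition is_max_cap (L h hbar d abar : R) (n : nat) (M : R) : Prop :=
  (exists alpha, feasible L h hbar d abar n alpha /\ Ctot L h hbar d n alpha = M) /\
  (forall alpha, feasible L h hbar d abar n alpha -> Ctot L h hbar d n alpha <= M).

(* Main.v *)
Require Import Defs.
From Stdlib Require Import Reals Lra Lia Psatz.
From HB Require structures.
From mathcomp Require all_boot all_order all_algebra all_classical all_reals all_analysis Rstruct Rstruct_topology.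

Module Aux.
Import HB.structures.
Import all_boot all_order all_algebra all_classical all_reals all_analysis Rstruct Rstruct_topology.
Import Order.TTheory GRing.Theory Num.Theory.
Import numFieldNormedType.Exports.
Local Open Scope classical_set_scope.
Local Open Scope ring_scope.

Lemma sum_cont (K : realType) n (f : K -> K) : continuous f ->
  continuous (fun v : 'rV[K]_n => \sum_(i < n) f (v ord0 i)).
Proof.
move=> cf.
apply: (@continuous_big _ _ +%R 0 predT).
  exact: add_continuous.
move=> i _ v.
apply: continuous_comp; last exact: cf.
exact: coord_continuous.
Qed.

Lemma gen_max (K : realType) n (f g : K -> K) : continuous f -> continuous g ->
 (exists a : 'I_n -> K, (forall i, 0 <= a i <= 1) /\ \sum_i g (a i) = 0) ->
 exists a : 'I_n -> K, ((forall i, 0 <= a i <= 1) /\ \sum_i g (a i) = 0) /\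
   forall b : 'I_n -> K, (forall i, 0 <= b i <= 1) -> \sum_i g (b i) = 0 ->
     \sum_i f (b i) <= \sum_i f (a i).
Proof.
move=> cf cg [a0 [a0b a0g]].
pose A := [set v : 'rV[K]_n | forall i, `[(0:K), 1]%classic (v ord0 i)] `&`
          ((fun v : 'rV[K]_n => \sum_(i < n) g (v ord0 i)) @^-1` [set x | x = 0]).
have cA : compact A.
  apply: compact_closedI.
    apply: (@rV_compact _ n (fun _ => `[(0:K), 1]%classic)) => _; exact: segment_compact.
  apply: preimage_closed; last exact: closed_eq.
  move=> v _; exact: sum_cont.
have A0 : A !=set0.
  exists (\row_i a0 i); split.
    by move=> i; rewrite mxE /= in_itv /=; exact: a0b.
  by rewrite /=; under eq_bigr do rewrite mxE.
have cfA : {within A, continuous (fun v : 'rV[K]_n => \sum_(i < n) f (v ord0 i))}.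
  by apply: continuous_subspaceT; exact: sum_cont.
have [c cA' cmax] := compact_EVT_max A0 cA cfA.
rewrite inE in cA'; case: cA' => cb cg0.
exists (fun i => c ord0 i); split.
  split => // i; have := cb i; rewrite /= in_itv /=; done.
move=> b bb bg.
have := cmax (\row_i b i).
under eq_bigr do rewrite mxE.
apply; rewrite inE; split.
  by move=> i; rewrite mxE /= in_itv /=; exact: bb.
by rewrite /=; under eq_bigr do rewrite mxE.
Qed.

Lemma rsum_big (m : nat) (F : nat -> R) : rsum m F = \sum_(i < m) F i.
Proof. elim: m => [|m IH]; first by rewrite big_ord0. by rewrite big_ord_recr /= IH. Qed.

Lemma exists_max_R (n : nat) (f g : R -> R) :
  (forall x, continuity_pt f x) -> (forall x, continuity_pt g x) ->
  (exists a : nat -> R, (forall i, Nat.lt i n.+1 -> Rle 0 (a i) /\ Rle (a i) 1) /\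
      rsum n.+1 (fun i => g (a i)) = 0) ->
  exists a : nat -> R, ((forall i, Nat.lt i n.+1 -> Rle 0 (a i) /\ Rle (a i) 1) /\
      rsum n.+1 (fun i => g (a i)) = 0) /\
   forall b : nat -> R, (forall i, Nat.lt i n.+1 -> Rle 0 (b i) /\ Rle (b i) 1) ->
      rsum n.+1 (fun i => g (b i)) = 0 ->
      Rle (rsum n.+1 (fun i => f (b i))) (rsum n.+1 (fun i => f (a i))).
Proof.
move=> cf cg [a0 [a0b a0g]].
have cf' : continuous f by move=> x; apply/continuity_pt_cvg.
have cg' : continuous g by move=> x; apply/continuity_pt_cvg.
have [|a [[ab ag] amax]] := @gen_max R n.+1 f g cf' cg'.
  exists (fun i => a0 (val i)); split.
    move=> i; have [/RleP h1 /RleP h2] := a0b _ (@ssrnat.ltP _ _ (ltn_ord i)).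
    by rewrite h1 h2.
  by rewrite rsum_big in a0g.
exists (fun i => a (inord i)); split.
  split.
    move=> i /ssrnat.ltP hi; have /andP[h1 h2] := ab (inord i).
    by split; apply/RleP.
  rewrite rsum_big (eq_bigr (fun i : 'I_n.+1 => g (a i))) //.
  by move=> i _; rewrite inord_val.
move=> b bb bg; apply/RleP.
rewrite !rsum_big.
have -> : \sum_(i < n.+1) f (a (inord i)) = \sum_(i < n.+1) f (a i).
  by apply: eq_bigr => i _; rewrite inord_val.
apply: (amax (fun i => b (val i))).
  move=> i; have [/RleP h1 /RleP h2] := bb _ (@ssrnat.ltP _ _ (ltn_ord i)).
  by rewrite h1 h2.
by rewrite rsum_big in bg.
Qed.

End Aux.

Open Scope R_scope.

Lemma exists_max_R : forall (n : nat) (f g : R -> R),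
  (forall x, continuity_pt f x) -> (forall x, continuity_pt g x) ->
  (exists a : nat -> R, (forall i, Nat.lt i (S n) -> Rle 0 (a i) /\ Rle (a i) 1) /\
      rsum (S n) (fun i => g (a i)) = 0) ->
  exists a : nat -> R, ((forall i, Nat.lt i (S n) -> Rle 0 (a i) /\ Rle (a i) 1) /\
      rsum (S n) (fun i => g (a i)) = 0) /\
   forall b : nat -> R, (forall i, Nat.lt i (S n) -> Rle 0 (b i) /\ Rle (b i) 1) ->
      rsum (S n) (fun i => g (b i)) = 0 ->
      Rle (rsum (S n) (fun i => f (b i))) (rsum (S n) (fun i => f (a i))).
Proof. exact Aux.exists_max_R. Qed.

Lemma div_le (X Y Z : R) : 0 < Y -> X <= Z * Y -> X / Y <= Z.
Proof.
  intros HY H. apply (Rmult_le_reg_r Y); [lra|]. unfold Rdiv.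
  rewrite Rmult_assoc, Rinv_l by lra. lra.
Qed.

Lemma le_div (X Y Z : R) : 0 < Y -> X * Y <= Z -> X <= Z / Y.
Proof.
  intros HY H. apply (Rmult_le_reg_r Y); [lra|]. unfold Rdiv.
  rewrite Rmult_assoc, Rinv_l by lra. lra.
Qed.

Lemma rsum_ext (n : nat) (f g : nat -> R) :
  (forall i, (i < n)%nat -> f i = g i) -> rsum n f = rsum n g.
Proof.
  induction n as [|n IH]; intros H; simpl; [reflexivity|].
  rewrite IH by (intros; apply H; lia). rewrite (H n) by lia. reflexivity.
Qed.

Definition cfg (k : nat) (b : R) (i : nat) : R :=
  if Nat.ltb i k then 1 else if Nat.eqb i k then b else 0.

Lemma rsum_prefix (h : R -> R) (k : nat) (b : R) :
  forall m, (m <= k)%nat -> rsum m (fun i => h (cfg k b i)) = INR m * h 1.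
Proof.
  induction m as [|m IH]; intros Hm; simpl rsum.
  - simpl; lra.
  - rewrite IH by lia. unfold cfg.
    replace (Nat.ltb m k) with true by (symmetry; apply Nat.ltb_lt; lia).
    rewrite S_INR. lra.
Qed.

Lemma rsum_cfg (h : R -> R) (k : nat) (b : R) :
  forall n, (k < n)%nat ->
  rsum n (fun i => h (cfg k b i)) = INR k * h 1 + h b + INR (n - 1 - k) * h 0.
Proof.
  induction n as [|m IH]; intros Hn; [lia|].
  simpl rsum.
  destruct (Nat.eq_dec k m) as [->|Hne].
  - rewrite rsum_prefix by lia. unfold cfg.
    rewrite Nat.ltb_irrefl, Nat.eqb_refl.
    replace (S m - 1 - m)%nat with 0%nat by lia. simpl. lra.
  - rewrite IH by lia. unfold cfg.
    replace (Nat.ltb m k) with false by (symmetry; apply Nat.ltb_ge; lia).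
    replace (Nat.eqb m k) with false by (symmetry; apply Nat.eqb_neq; lia).
    replace (S m - 1 - k)%nat with (S (m - 1 - k)) by lia.
    rewrite S_INR. lra.
Qed.

Lemma sign_change (phi : nat -> R) :
  forall m, (1 <= m)%nat -> phi 0%nat <= 0 -> 0 <= phi m ->
  exists k, (k < m)%nat /\ phi k <= 0 /\ 0 <= phi (S k).
Proof.
  induction m as [|m IH]; intros Hm H0 Hm'; [lia|].
  destruct (Nat.eq_dec m 0) as [->|Hm0].
  - exists 0%nat. split; [lia|]. split; assumption.
  - destruct (Rle_dec (phi m) 0) as [Hle|Hgt].
    + exists m. split; [lia|]. split; assumption.
    + destruct (IH ltac:(lia) H0 ltac:(lra)) as [k [Hk1 Hk2]].
      exists k. split; [lia|]. exact Hk2.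
Qed.

Lemma key_ineq (A B s a : R) : s*s = A*(A-B) ->
  B*(A - B*a^2) <= 2*(A - s)*(A - B*a).
Proof.
  intros Hs.
  assert (E: 2*(A-s)*(A-B*a) - B*(A-B*a^2) = (A-B*a-s)^2 + (A*(A-B) - s*s)) by ring.
  rewrite Hs in E. assert (0 <= (A-B*a-s)^2) by apply pow2_ge_0. lra.
Qed.

Lemma r_bound (A B s a : R) : 0 < B -> 0 < A - B -> 0 <= s -> s*s = A*(A-B) ->
  (A + s)*(A - B*a^2) <= 2*A*(A - B*a).
Proof.
  intros HB HAB Hs0 Hs.
  pose proof (key_ineq A B s a Hs) as K.
  assert (H1: (A+s)*(B*(A - B*a^2)) <= (A+s)*(2*(A - s)*(A - B*a))).
  { apply Rmult_le_compat_l; lra. }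
  assert (H2: (A+s)*(2*(A - s)*(A - B*a)) = B*(2*A*(A-B*a))).
  { replace ((A+s)*(2*(A - s)*(A - B*a))) with (2*(A*A - s*s)*(A-B*a)) by ring.
    rewrite Hs. ring. }
  rewrite H2 in H1.
  apply (Rmult_le_reg_l B); [lra|]. nra.
Qed.

Lemma final_arith (A B s d N kk m c1 c0 cb abar beta Cstar : R) :
 0 < B -> 0 < A - B -> 0 <= s -> s*s = A*(A-B) -> 0 < d -> 0 <= abar <= 1 ->
 0 <= beta <= 1 -> 1 <= N -> kk + m = N - 1 -> 0 <= kk -> 0 <= m ->
 c1*(A-B) = d -> c0*A = d -> cb*(A - B*beta^2) = d ->
 kk*((1-abar)*c1) + (beta-abar)*cb + m*((0-abar)*c0) = 0 ->
 kk*c1 + cb + m*c0 <= Cstar ->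
 N * (d/(A - B*abar)) / Cstar <= 2*N*A/((2*N-1)*A + s).
Proof.
  intros HB HAB Hs0 Hs Hd Ha Hb HN Hkm Hkk Hm Hc1 Hc0 Hcb HG HC.
  set (D := A - B*abar).
  assert (HD : A - B <= D) by (unfold D; nra).
  assert (Hbd : 0 < A - B*beta^2) by (assert (beta^2 <= 1) by nra; nra).
  assert (Hc1p : 0 < c1) by nra.
  assert (Hc0p : 0 < c0) by nra.
  assert (Hcbp : 0 < cb) by nra.
  set (T0 := kk*c1 + cb + m*c0).
  assert (HT0 : T0 * D = d*(N-1) + cb*(A - B*beta)).
  { unfold T0, D.
    assert (E1: abar*(kk*c1 + cb + m*c0) = kk*c1 + beta*cb) by nra.
    transitivity (A*(kk*c1 + cb + m*c0) - B*(abar*(kk*c1 + cb + m*c0))); [ring|].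
    rewrite E1.
    transitivity (kk*(c1*(A-B)) + m*(c0*A) + cb*(A - B*beta)); [ring|].
    rewrite Hc1, Hc0. rewrite <- Hkm. ring. }
  pose proof (r_bound A B s beta HB HAB Hs0 Hs) as Hr.
  assert (HX : d*(A+s) <= 2*A*(cb*(A - B*beta))).
  { assert (cb*((A+s)*(A-B*beta^2)) <= cb*(2*A*(A-B*beta))) by (apply Rmult_le_compat_l; lra).
    rewrite <- Hcb.
    replace (cb * (A - B * beta ^ 2) * (A + s)) with (cb*((A+s)*(A-B*beta^2))) by ring.
    replace (2*A*(cb*(A-B*beta))) with (cb*(2*A*(A-B*beta))) by ring. assumption. }
  assert (HQ : 0 < (2*N-1)*A + s) by nra.
  assert (HT0p : 0 < T0) by (unfold T0; nra).
  assert (HC' : T0 <= Cstar) by (unfold T0; exact HC).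
  apply div_le; [lra|].
  apply Rle_trans with (2*N*A/((2*N-1)*A+s) * T0); [|apply Rmult_le_compat_l; [apply Rlt_le; apply Rdiv_lt_0_compat; nra|exact HC']].
  replace (N * (d/D)) with ((N*d)/D) by (field; lra).
  apply div_le; [lra|].
  replace (2*N*A/((2*N-1)*A+s) * T0 * D) with ((2*N*A*(T0*D))/((2*N-1)*A+s)) by (field; lra).
  apply le_div; [lra|].
  rewrite HT0. nra.
Qed.

Lemma last_ineq (A s N : R) : 0 < A -> 0 <= s -> 1 <= N ->
  2*N*A/((2*N-1)*A + s) <= 2*N/(2*N-1).
Proof.
  intros HA Hs HN.
  apply div_le; [nra|].
  replace (2*N/(2*N-1) * ((2*N-1)*A+s)) with (2*N*A + 2*N*s/(2*N-1)) by (field; lra).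
  assert (0 <= 2*N*s/(2*N-1)) by (apply Rmult_le_pos; [nra|apply Rlt_le, Rinv_0_lt_compat; lra]).
  lra.
Qed.

Section Main.
Variables (L h hbar d : R).
Hypotheses (HL : 0 < L) (Hhbar : 0 <= hbar) (Hh : hbar < h) (Hd : 0 < d).

Let A := L + h.
Let B := h - hbar.

Lemma cap_eq a : 0 < A - B * a ^ 2 -> cap L h hbar d a = d / (A - B * a ^ 2).
Proof. intros H. unfold cap, k1, k2, A, B in *. field. split; lra. Qed.

Lemma capUB_eq a : 0 < A - B * a -> capUB L h hbar d a = d / (A - B * a).
Proof. intros H. unfold capUB, k1, k2, A, B in *. field. split; lra. Qed.

Lemma pos_den2 a : 0 <= a <= 1 -> 0 < A - B * a ^ 2.
Proof. intros Ha. unfold A, B. assert (a^2 <= 1) by nra. nra. Qed.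

Lemma pos_den1 a : 0 <= a <= 1 -> 0 < A - B * a.
Proof. intros Ha. unfold A, B. nra. Qed.

End Main.

Theorem theorem3 (L h hbar d : R)
  (HL : 0 < L) (Hhbar : 0 <= hbar) (Hh : hbar < h) (Hd : 0 < d) :
  forall (abar : R) (n : nat), 0 <= abar <= 1 -> (1 <= n)%nat ->
    ( INR n * capUB L h hbar d abar / (INR n * cap L h hbar d abar)
        <= 2 * (L + h - sqrt ((L + h) * (L + hbar))) / (h - hbar)
      /\ 2 * (L + h - sqrt ((L + h) * (L + hbar))) / (h - hbar) <= 2 )
    /\
    (exists Cstar : R,
       is_max_cap L h hbar d abar n Cstar /\
       INR n * capUB L h hbar d abar / Cstar
         <= 2 * INR n * (L + h)
            / ((2 * INR n - 1) * (L + h) + sqrt ((L + h) * (L + hbar)))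
       /\ 2 * INR n * (L + h)
            / ((2 * INR n - 1) * (L + h) + sqrt ((L + h) * (L + hbar)))
          <= 2 * INR n / (2 * INR n - 1)).
Proof.
  intros abar n Habar Hn.
  set (s := sqrt ((L + h) * (L + hbar))).
  assert (Hs2 : s * s = (L + h) * ((L + h) - (h - hbar))).
  { unfold s. rewrite sqrt_sqrt by nra. ring. }
  assert (Hs0 : 0 <= s) by (unfold s; apply sqrt_pos).
  assert (HsB : L + hbar <= s) by nra.
  assert (HnR : 1 <= INR n) by (apply (le_INR 1 n) in Hn; simpl in Hn; exact Hn).
  assert (Hcap : forall a, 0 <= a <= 1 ->
     cap L h hbar d a = d / ((L + h) - (h - hbar) * a ^ 2)).
  { intros a Ha. apply cap_eq; auto. apply pos_den2; auto. }
  assert (HcapUB : forall a, 0 <= a <= 1 ->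
     capUB L h hbar d a = d / ((L + h) - (h - hbar) * a)).
  { intros a Ha. apply capUB_eq; auto. apply pos_den1; auto. }
  split; [split|].
  - rewrite (Hcap abar Habar), (HcapUB abar Habar).
    pose proof (pos_den2 L h hbar HL Hhbar Hh abar Habar) as P2.
    pose proof (pos_den1 L h hbar HL Hhbar Hh abar Habar) as P1.
    replace (INR n * (d / (L + h - (h - hbar) * abar)) /
      (INR n * (d / (L + h - (h - hbar) * abar ^ 2))))
      with ((L + h - (h - hbar) * abar ^ 2) / (L + h - (h - hbar) * abar))
      by (field; repeat split; lra).
    apply div_le; [lra|].
    replace (2 * (L + h - s) / (h - hbar) * (L + h - (h - hbar) * abar))
      with ((2 * (L + h - s) * (L + h - (h - hbar) * abar)) / (h - hbar))
      by (field; lra).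
    apply le_div; [lra|].
    pose proof (key_ineq (L + h) (h - hbar) s abar Hs2). lra.
  - apply div_le; lra.
  - destruct n as [|n']; [lia|].
    set (N := S n') in *.
    set (A := L + h) in *. set (B := h - hbar) in *.
    assert (HB : 0 < B) by (unfold B; lra).
    assert (HAB : 0 < A - B) by (unfold A, B; lra).
    set (sq1 := fun a : R => (a^2 + 1 - Rabs (a^2 - 1))/2).
    assert (Hsq1 : forall a, sq1 a <= 1).
    { intro a. unfold sq1. pose proof (Rle_abs (a^2-1)). lra. }
    assert (Hsq1e : forall a, 0 <= a <= 1 -> sq1 a = a^2).
    { intros a Ha. unfold sq1. rewrite Rabs_left1 by nra. lra. }
    set (capm := fun a : R => d / (A - B * sq1 a)).
    set (gm := fun a : R => (a - abar) * capm a).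
    assert (Hcapm : forall a, 0 <= a <= 1 -> capm a = cap L h hbar d a).
    { intros a Ha. unfold capm. rewrite Hsq1e, Hcap by exact Ha. reflexivity. }
    assert (Hcontm : forall x, continuity_pt capm x).
    { intro x. unfold capm, sq1.
      apply continuity_pt_div.
      - apply continuity_pt_const. intros u v; reflexivity.
      - apply continuity_pt_minus.
        + apply continuity_pt_const. intros u v; reflexivity.
        + apply continuity_pt_mult.
          * apply continuity_pt_const. intros u v; reflexivity.
          * apply continuity_pt_mult.
            -- apply continuity_pt_minus.
               ++ apply continuity_pt_plus.
                  ** apply derivable_continuous_pt. reg.
                  ** apply continuity_pt_const. intros u v; reflexivity.
               ++ apply (continuity_pt_comp (fun a => a^2 - 1) Rabs).
                  ** apply derivable_continuous_pt. reg.
                  ** apply Rcontinuity_abs.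
            -- apply continuity_pt_const. intros u v; reflexivity.
      - specialize (Hsq1 x). unfold sq1 in Hsq1. nra. }
    assert (Hcontg : forall x, continuity_pt gm x).
    { intro x. unfold gm. apply continuity_pt_mult; [|apply Hcontm].
      apply continuity_pt_minus.
      - apply derivable_continuous_pt. reg.
      - apply continuity_pt_const. intros u v; reflexivity. }
    set (c1 := cap L h hbar d 1). set (c0 := cap L h hbar d 0).
    assert (Hc1 : c1 * (A - B) = d).
    { unfold c1. rewrite Hcap by lra. unfold A, B in *. field. lra. }
    assert (Hc0 : c0 * A = d).
    { unfold c0. rewrite Hcap by lra. unfold A, B in *. field. lra. }
    assert (Hc1p : 0 < c1) by nra.
    assert (Hc0p : 0 < c0) by nra.
    set (phi := fun k : nat => INR k * ((1 - abar) * c1) + INR (N - k) * ((0 - abar) * c0)).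
    destruct (sign_change phi N ltac:(unfold N; lia)) as [k [Hk [Hphik HphiSk]]].
    { unfold phi. rewrite Nat.sub_0_r. change (INR 0) with 0.
      pose proof (pos_INR N). assert (0 <= abar * c0) by nra. nra. }
    { unfold phi. rewrite Nat.sub_diag. change (INR 0) with 0.
      pose proof (pos_INR N). assert (0 <= (1 - abar) * c1) by nra. nra. }
    set (K := INR k * ((1 - abar) * c1) + INR (N - 1 - k) * ((0 - abar) * c0)).
    assert (Ephik : phi k = K + (0 - abar) * c0).
    { unfold phi, K. replace (N - k)%nat with (S (N - 1 - k)) by lia.
      rewrite S_INR. ring. }
    assert (EphiSk : phi (S k) = K + (1 - abar) * c1).
    { unfold phi, K. replace (N - S k)%nat with (N - 1 - k)%nat by lia.
      rewrite S_INR. ring. }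
    set (P := fun b : R => K * (A - B * b^2) + (b - abar) * d).
    assert (HPc : continuity P).
    { unfold P. reg. }
    destruct (IVT_cor P 0 1 HPc ltac:(lra)) as [beta [Hbeta HPb]].
    { unfold P.
      replace (K * (A - B * 0^2) + (0 - abar) * d) with (A * phi k)
        by (rewrite Ephik, <- Hc0; ring).
      replace (K * (A - B * 1^2) + (1 - abar) * d) with ((A - B) * phi (S k))
        by (rewrite EphiSk, <- Hc1; ring).
      assert (0 <= A * (A - B)) by nra.
      assert (phi k * phi (S k) <= 0) by nra.
      nra. }
    set (cb := cap L h hbar d beta).
    assert (Hcb : cb * (A - B * beta^2) = d).
    { unfold cb. rewrite Hcap by lra. field.
      pose proof (pos_den2 L h hbar HL Hhbar Hh beta Hbeta). fold A B in H. lra. }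
    assert (Hcfgb : forall i, 0 <= cfg k beta i <= 1).
    { intro i. unfold cfg. destruct (Nat.ltb i k); [lra|].
      destruct (Nat.eqb i k); lra. }
    assert (HGcfg : Gcon L h hbar d abar N (cfg k beta) = 0).
    { unfold Gcon.
      rewrite (rsum_cfg (fun a => (a - abar) * cap L h hbar d a) k beta N Hk).
      fold c1 c0 cb.
      assert (E : (K + (beta - abar) * cb) * (A - B * beta^2) = 0).
      { unfold P in HPb. rewrite <- HPb.
        transitivity (K * (A - B * beta^2) + (beta - abar) * (cb * (A - B * beta^2))); [ring|].
        rewrite Hcb. reflexivity. }
      assert (Hbd : 0 < A - B * beta^2).
      { pose proof (pos_den2 L h hbar HL Hhbar Hh beta Hbeta). fold A B in H. lra. }
      apply Rmult_integral in E. destruct E as [E|E]; [|lra].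
      unfold K in E. lra. }
    assert (HTcfg : Ctot L h hbar d N (cfg k beta) =
                    INR k * c1 + cb + INR (N - 1 - k) * c0).
    { unfold Ctot. rewrite (rsum_cfg (fun a => cap L h hbar d a) k beta N Hk).
      reflexivity. }
    assert (Hext_c : forall a : nat -> R, (forall i, (i < N)%nat -> 0 <= a i <= 1) ->
              rsum N (fun i => capm (a i)) = Ctot L h hbar d N a).
    { intros a Ha. unfold Ctot. apply rsum_ext. intros i Hi. apply Hcapm, Ha, Hi. }
    assert (Hext_g : forall a : nat -> R, (forall i, (i < N)%nat -> 0 <= a i <= 1) ->
              rsum N (fun i => gm (a i)) = Gcon L h hbar d abar N a).
    { intros a Ha. unfold Gcon. apply rsum_ext. intros i Hi. unfold gm.
      rewrite Hcapm by (apply Ha, Hi). reflexivity. }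
    destruct (exists_max_R n' capm gm Hcontm Hcontg) as [astar [[Hab Hag] Hamax]].
    { exists (cfg k beta). split.
      - intros i _. apply Hcfgb.
      - fold N. rewrite Hext_g by (intros; apply Hcfgb). exact HGcfg. }
    fold N in Hab, Hag, Hamax.
    exists (rsum N (fun i => capm (astar i))).
    split; [split|split].
    + exists astar. split; [split|].
      * exact Hab.
      * rewrite <- Hext_g by exact Hab. exact Hag.
      * symmetry. apply Hext_c. exact Hab.
    + intros alpha [Hal HalG].
      rewrite <- Hext_c by exact Hal. apply Hamax; [exact Hal|].
      rewrite Hext_g by exact Hal. exact HalG.
    + rewrite (HcapUB abar Habar). fold A B.
      assert (HC : INR k * c1 + cb + INR (N - 1 - k) * c0 <=
                   rsum N (fun i => capm (astar i))).
      { rewrite <- HTcfg. rewrite <- Hext_c by (intros; apply Hcfgb).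
        apply Hamax; [intros; apply Hcfgb|].
        rewrite Hext_g by (intros; apply Hcfgb). exact HGcfg. }
      apply (final_arith A B s d (INR N) (INR k) (INR (N - 1 - k)) c1 c0 cb abar beta
               _ HB HAB Hs0 Hs2 Hd Habar Hbeta HnR).
      * rewrite <- plus_INR. replace (k + (N - 1 - k))%nat with (N - 1)%nat by lia.
        rewrite minus_INR by lia. simpl. lra.
      * apply pos_INR.
      * apply pos_INR.
      * exact Hc1.
      * exact Hc0.
      * exact Hcb.
      * pose proof HGcfg as G. unfold Gcon in G.
        rewrite (rsum_cfg (fun a => (a - abar) * cap L h hbar d a) k beta N Hk) in G.
        fold c1 c0 cb in G. lra.
      * exact HC.
    + apply last_ineq; [lra|exact Hs0|exact HnR].
Qed.
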